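(* The function $s \mapsto s\,\dfrac{\theta_3'(s)}{\theta_3(s)}$ is strictly increasing on $[1,\infty)$.
   Context: For $s>0$, $\theta_3(s) = \sum_{k\in\mathbb{Z}} e^{-\pi k^2 s}$. *)

(* Defs.v *)
From Stdlib Require Import Reals ZArith ClassicalEpsilon.
Open Scope R_scope.

Definition theta_term (s : R) (k : Z) : R := exp (- PI * (IZR k)^2 * s).

Definition theta_partial (s : R) (N : nat) : R :=
  sum_f_R0 (fun n => theta_term s (Z.of_nat n - Z.of_nat N)%Z) (2 * N).

(* theta_3(s) = sum_{k in Z} exp(-pi k^2 s), the limit of the symmetric
   partial sums (the series converges absolutely for s > 0). *)
Definition theta3 (s : R) : R :=
  epsilon (inhabits 0) (fun l => Un_cv (theta_partial s) l).

(* Main.v *)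
Require Import Defs.
From Stdlib Require Import Reals Lra Lia Psatz ClassicalEpsilon.
From Coquelicot Require Import Coquelicot.
Open Scope R_scope.

Definition term (k : nat) (s : R) (n : nat) : R :=
  INR n ^ (2 * k) * exp (- PI * INR n ^ 2 * s).
Definition psum k s N := sum_f_R0 (term k s) N.
Definition Sk k s := epsilon (inhabits 0) (fun l => Un_cv (psum k s) l).

Lemma term_nonneg k s n : 0 <= term k s n.
Proof.
  unfold term. apply Rmult_le_pos. apply pow_le, pos_INR. left; apply exp_pos.
Qed.

Lemma psum_growing k s : Un_growing (psum k s).
Proof. intro n. unfold psum; simpl. pose proof (term_nonneg k s (S n)); lra. Qed.

Lemma exp_nat_mul n x : exp (INR n * x) = exp x ^ n.
Proof.
  induction n. simpl. rewrite Rmult_0_l, exp_0; auto.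
  rewrite S_INR, Rmult_plus_distr_r, exp_plus, IHn, Rmult_1_l. simpl; ring.
Qed.

Lemma geom_bound (r : R) N : 0 <= r < 1 -> sum_f_R0 (fun i => r ^ i) N <= 1 / (1 - r).
Proof.
  intros Hr. rewrite tech3 by lra.
  unfold Rdiv. apply Rmult_le_compat_r. left; apply Rinv_0_lt_compat; lra.
  pose proof (pow_le r (S N) (proj1 Hr)); lra.
Qed.

Lemma exp_le x y : x <= y -> exp x <= exp y.
Proof. intros [H|H]. left; apply exp_increasing; auto. subst; lra. Qed.

Lemma INR_le_sq n : INR n <= INR n ^ 2.
Proof. destruct n. simpl; lra. pose proof (pos_INR n). rewrite S_INR. nra. Qed.

Lemma term_bound k s n : 0 < s ->
  term k s n <= (INR k + 1) ^ k / (PI * s) ^ k * exp (- (PI * s / (INR k + 1))) ^ n.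
Proof.
  intros Hs. set (b := PI * s / (INR k + 1)).
  assert (Hk : 0 < INR k + 1) by (pose proof (pos_INR k); lra).
  assert (Hb : 0 < b) by (unfold b; pose proof PI_RGT_0; apply Rdiv_lt_0_compat; nra).
  set (m := INR n ^ 2).
  assert (Hm : 0 <= m) by (unfold m; apply pow_le, pos_INR).
  assert (E : exp (- PI * INR n ^ 2 * s) = exp (- b * m) ^ k * exp (- b * m)).
  { rewrite <- exp_nat_mul, <- exp_plus. f_equal. unfold b, m. field. lra. }
  unfold term. rewrite E.
  replace (INR n ^ (2 * k)) with (m ^ k) by (unfold m; rewrite <- pow_mult; auto).
  rewrite <- Rmult_assoc, <- Rpow_mult_distr.
  assert (H1 : m * exp (- b * m) <= 1 / b).
  { pose proof (exp_ineq1_le (b*m)).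
    assert (exp (b*m) * exp (- b * m) = 1) by (rewrite <- exp_plus; replace (b*m + - b*m) with 0 by ring; apply exp_0).
    apply Rmult_le_reg_l with b; auto. pose proof (exp_pos (-b*m)). field_simplify; nra. }
  assert (H2 : exp (- b * m) <= exp (- b) ^ n).
  { rewrite <- exp_nat_mul. apply exp_le. pose proof (INR_le_sq n). unfold m. nra. }
  replace ((INR k + 1) ^ k / (PI * s) ^ k) with ((1/b)^k).
  2:{ unfold b. unfold Rdiv. rewrite Rmult_1_l, Rinv_mult, Rinv_inv, Rpow_mult_distr, pow_inv. ring. }
  apply Rmult_le_compat. apply pow_le. pose proof (exp_pos (-b*m)); nra.
  left; apply exp_pos. apply pow_incr. split; auto. pose proof (exp_pos (-b*m)); nra.
  replace (- (PI * s / (INR k + 1))) with (-b) by auto. auto.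
Qed.

Lemma psum_conv k s : 0 < s -> { l | Un_cv (psum k s) l }.
Proof.
  intros Hs. apply growing_cv. apply psum_growing.
  set (C := (INR k + 1) ^ k / (PI * s) ^ k).
  set (r := exp (- (PI * s / (INR k + 1)))).
  assert (HC : 0 <= C).
  { unfold C. pose proof (pos_INR k); pose proof PI_RGT_0.
    apply Rmult_le_pos. apply pow_le; lra. left; apply Rinv_0_lt_compat, pow_lt; nra. }
  assert (Hr : 0 <= r < 1).
  { unfold r. split. left; apply exp_pos.
    pose proof (pos_INR k); pose proof PI_RGT_0.
    assert (0 < PI * s / (INR k + 1)) by (apply Rdiv_lt_0_compat; nra).
    apply Rlt_le_trans with (exp 0); [apply exp_increasing; lra | rewrite exp_0; lra]. }
  exists (C * (1 / (1 - r))). red; intros x [N HN]; rewrite HN.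
  unfold psum. apply Rle_trans with (sum_f_R0 (fun i => C * r ^ i) N).
  apply sum_Rle. intros; apply term_bound; auto.
  replace (sum_f_R0 (fun i : nat => C * r ^ i) N) with (C * sum_f_R0 (fun i => r ^ i) N).
  apply Rmult_le_compat_l; auto. apply geom_bound; auto.
  rewrite scal_sum. apply sum_eq. intros; ring.
Qed.

Lemma Sk_spec k s : 0 < s -> Un_cv (psum k s) (Sk k s).
Proof.
  intros Hs. unfold Sk. apply epsilon_spec. destruct (psum_conv k s Hs) as [l H]. exists l; auto.
Qed.

Lemma sum_S (f : nat -> R) n : sum_f_R0 f (S n) = sum_f_R0 f n + f (S n).
Proof. reflexivity. Qed.

Lemma sym_sum (h : Z -> R) (Hh : forall z, h (- z)%Z = h z) N :
  sum_f_R0 (fun n => h (Z.of_nat n - Z.of_nat N)%Z) (2 * N) =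
  2 * sum_f_R0 (fun n => h (Z.of_nat n)) N - h 0%Z.
Proof.
  induction N.
  - simpl. ring.
  - replace (2 * S N)%nat with (S (S (2 * N))) by lia.
    rewrite decomp_sum by lia. rewrite Nat.pred_succ.
    rewrite sum_S.
    rewrite (sum_eq (fun i => h (Z.of_nat (S i) - Z.of_nat (S N))%Z) (fun n => h (Z.of_nat n - Z.of_nat N)%Z)).
    2:{ intros i _. f_equal. lia. }
    rewrite IHN. rewrite (sum_S (fun n => h (Z.of_nat n)) N).
    replace (Z.of_nat 0 - Z.of_nat (S N))%Z with (- Z.of_nat (S N))%Z by lia.
    rewrite Hh.
    replace (Z.of_nat (S (S (2 * N))) - Z.of_nat (S N))%Z with (Z.of_nat (S N)) by lia.
    ring.
Qed.

Lemma theta_partial_eq s N : theta_partial s N = 2 * psum 0 s N - 1.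
Proof.
  unfold theta_partial. rewrite sym_sum.
  - unfold psum. replace (theta_term s 0) with 1.
    2:{ unfold theta_term. replace (- PI * IZR 0 ^ 2 * s) with 0 by (simpl; ring). rewrite exp_0; auto. }
    f_equal. f_equal. apply sum_eq. intros i _. unfold theta_term, term.
    rewrite <- INR_IZR_INZ. simpl pow at 2. ring.
  - intros z. unfold theta_term. rewrite opp_IZR. f_equal. ring.
Qed.

Lemma theta3_eq s : 0 < s -> theta3 s = 2 * Sk 0 s - 1.
Proof.
  intros Hs.
  assert (H : Un_cv (theta_partial s) (2 * Sk 0 s - 1)).
  { intros eps He. destruct (Sk_spec 0 s Hs (eps/2)) as [N HN]. lra.
    exists N. intros n Hn. rewrite theta_partial_eq. specialize (HN n Hn).
    unfold Rdist in *. replace (2 * psum 0 s n - 1 - (2 * Sk 0 s - 1)) with (2 * (psum 0 s n - Sk 0 s)) by ring.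
    rewrite Rabs_mult, Rabs_right by lra. lra. }
  unfold theta3. apply UL_sequence with (theta_partial s); auto.
  apply epsilon_spec. exists (2 * Sk 0 s - 1); auto.
Qed.

Lemma term_deriv k n y : derivable_pt_lim (fun y => term k y n) y (- PI * term (S k) y n).
Proof.
  apply is_derive_Reals. unfold term. auto_derive; auto.
  replace (2 * S k)%nat with ((k + (k + 0)) + 2)%nat by lia. rewrite (pow_add (INR n) (k + (k + 0)) 2). replace (INR n * (INR n * 1)) with (INR n ^ 2) by ring. ring.
Qed.

Lemma psum_deriv k N y :
  derivable_pt_lim (fun y => psum k y N) y (sum_f_R0 (fun i => - PI * term (S k) y i) N).
Proof.
  induction N.
  - unfold psum. simpl. apply term_deriv.
  - unfold psum. simpl. apply derivable_pt_lim_plus; [apply IHN | apply term_deriv].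
Qed.

Lemma sum_scal (a : nat -> R) c n : sum_f_R0 (fun i => c * a i) n = c * sum_f_R0 a n.
Proof. induction n; simpl; [ring | rewrite IHn; ring]. Qed.

Lemma cv_scal u l c : Un_cv u l -> Un_cv (fun n => c * u n) (c * l).
Proof.
  intros H. destruct (Req_dec c 0) as [->|Hc].
  - intros eps He. exists 0%nat. intros. unfold Rdist. rewrite !Rmult_0_l, Rminus_0_r, Rabs_R0; auto.
  - intros eps He. destruct (H (eps / Rabs c)) as [N HN].
    apply Rdiv_lt_0_compat; auto. apply Rabs_pos_lt; auto.
    exists N. intros n Hn. specialize (HN n Hn). unfold Rdist in *.
    rewrite <- Rmult_minus_distr_l, Rabs_mult.
    apply Rmult_lt_reg_r with (/ Rabs c). apply Rinv_0_lt_compat, Rabs_pos_lt; auto.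
    replace (Rabs c * Rabs (u n - l) * / Rabs c) with (Rabs (u n - l)).
    exact HN. field. apply Rabs_no_R0; auto.
Qed.

Lemma Mtest (fn : nat -> R -> R) (g : R -> R) (A : nat -> R) (lA : R) c (d : posreal) :
  Un_cv (fun N => sum_f_R0 A N) lA ->
  (forall n y, Boule c d y -> Rabs (fn n y) <= A n) ->
  (forall y, Boule c d y -> Un_cv (fun N => sum_f_R0 (fun i => fn i y) N) (g y)) ->
  CVU (fun N y => sum_f_R0 (fun i => fn i y) N) g c d.
Proof.
  intros HA Hb Hc eps He. destruct (HA eps He) as [N HN].
  exists N. intros n y Hn Hy.
  assert (T := sum_maj1 fn A y (g y) lA n (Hc y Hy) HA (fun m => Hb m y Hy)).
  specialize (HN n Hn). unfold Rdist in HN.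
  eapply Rle_lt_trans. exact T. rewrite Rabs_minus_sym in HN.
  eapply Rle_lt_trans. apply Rle_abs. exact HN.
Qed.

Lemma term_anti k n x y : x <= y -> term k y n <= term k x n.
Proof.
  intros H. unfold term. apply Rmult_le_compat_l. apply pow_le, pos_INR.
  apply exp_le. pose proof PI_RGT_0. assert (0 <= INR n ^ 2) by (apply pow_le, pos_INR).
  assert (0 <= PI * INR n ^ 2) by nra. nra.
Qed.

Lemma Sk_deriv k s : 0 < s -> derivable_pt_lim (Sk k) s (- PI * Sk (S k) s).
Proof.
  intros Hs.
  assert (Hd : 0 < s / 2) by lra.
  set (d := mkposreal _ Hd).
  assert (Bpos : forall y, Boule s d y -> s / 2 < y).
  { intros y Hy. unfold Boule in Hy. simpl in Hy. apply Rabs_def2 in Hy. lra. }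
  apply (CVU_derivable (fun N y => psum k y N) (fun N y => sum_f_R0 (fun i => - PI * term (S k) y i) N)
     (Sk k) (fun y => - PI * Sk (S k) y) s d).
  - apply Mtest with (A := fun i => PI * term (S k) (s/2) i) (lA := PI * Sk (S k) (s/2)).
    + apply (Un_cv_ext (fun N => PI * psum (S k) (s/2) N)).
      { intros; unfold psum; rewrite sum_scal; auto. }
      apply cv_scal, Sk_spec; auto.
    + intros n y Hy. pose proof PI_RGT_0. pose proof (term_nonneg (S k) y n).
      rewrite Rabs_left1 by nra. pose proof (term_anti (S k) n (s/2) y). 
      specialize (Bpos y Hy). nra.
    + intros y Hy. apply (Un_cv_ext (fun N => - PI * psum (S k) y N)).
      { intros; unfold psum; rewrite sum_scal; auto. }
      apply cv_scal, Sk_spec. specialize (Bpos y Hy); lra.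
  - intros y Hy. apply Sk_spec. specialize (Bpos y Hy); lra.
  - intros n y _. apply psum_deriv.
  - apply Boule_center.
Qed.

Lemma deriv_local f g x l d : 0 < d -> (forall y, Rabs (y - x) < d -> f y = g y) ->
  derivable_pt_lim f x l -> derivable_pt_lim g x l.
Proof.
  intros Hd Heq H eps He. destruct (H eps He) as [del Hdel].
  assert (Hm : 0 < Rmin del d) by (apply Rmin_pos; [apply cond_pos | auto]).
  exists (mkposreal _ Hm). intros h Hh Hhd. simpl in Hhd.
  rewrite <- !Heq.
  - apply Hdel; auto. eapply Rlt_le_trans; [exact Hhd | apply Rmin_l].
  - unfold Rminus; rewrite Rplus_opp_r, Rabs_R0; auto.
  - replace (x + h - x) with h by ring. eapply Rlt_le_trans; [exact Hhd | apply Rmin_r].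
Qed.

Lemma theta3_deriv s : 0 < s -> derivable_pt_lim theta3 s (2 * (- PI * Sk 1 s) - 0).
Proof.
  intros Hs. apply deriv_local with (f := fun y => 2 * Sk 0 y - 1) (d := s); auto.
  - intros y Hy. apply Rabs_def2 in Hy. rewrite theta3_eq; auto. lra.
  - apply derivable_pt_lim_minus. apply derivable_pt_lim_scal. apply Sk_deriv; auto.
    apply derivable_pt_lim_const.
Qed.

Lemma Sk_ge_psum k s N : 0 < s -> psum k s N <= Sk k s.
Proof. intros Hs. apply growing_ineq. apply psum_growing. apply Sk_spec; auto. Qed.

Lemma S0_ge1 s : 0 < s -> 1 <= Sk 0 s.
Proof.
  intros Hs. eapply Rle_trans; [| apply (Sk_ge_psum 0 s 0); auto].
  unfold psum, term. simpl sum_f_R0. replace (- PI * (0 * (0 * 1)) * s) with 0 by ring. rewrite exp_0. lra.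
Qed.

Lemma S1_pos s : 0 < s -> 0 < Sk 1 s.
Proof.
  intros Hs. eapply Rlt_le_trans; [| apply (Sk_ge_psum 1 s 1); auto].
  unfold psum, term. simpl sum_f_R0. 
  pose proof (exp_pos (- PI * (1 * (1 * 1)) * s)). lra.
Qed.

Lemma S2_ge_S1 s : 0 < s -> Sk 1 s <= Sk 2 s.
Proof.
  intros Hs. apply (@Rle_cv_lim (psum 1 s) (psum 2 s) (Sk 1 s) (Sk 2 s)); try apply Sk_spec; auto.
  intros N. apply sum_Rle. intros n _. unfold term. apply Rmult_le_compat_r.
  left; apply exp_pos. simpl. destruct n. simpl; lra. pose proof (pos_INR n). rewrite S_INR.
  assert (1 <= (INR n + 1) * (INR n + 1)) by nra. nra.
Qed.

Lemma exp_mPI_le : exp (- PI) <= 1 / 8.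
Proof.
  pose proof (exp_ineq1_le 1). pose proof PI_RGT_0.
  assert (E3 : exp 3 = exp 1 * exp 1 * exp 1) by (rewrite <- !exp_plus; f_equal; ring).
  assert (8 <= exp 3) by (rewrite E3; nra).
  assert (exp 3 <= exp PI) by (apply exp_le; pose proof PI2_3_2; lra).
  assert (exp PI * exp (- PI) = 1) by (rewrite <- exp_plus, Rplus_opp_r; apply exp_0).
  pose proof (exp_pos (- PI)). apply Rmult_le_reg_l with (exp PI). lra. nra.
Qed.

Lemma pow_aux r N : 0 <= r <= 1/8 -> (INR N + 1) ^ 2 * r ^ N <= (1/2) ^ N.
Proof.
  intros Hr. induction N.
  - simpl; lra.
  - rewrite S_INR. simpl pow. simpl pow in IHN. pose proof (pos_INR N).
    pose proof (pow_le r N (proj1 Hr)).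
    set (p := r ^ N) in *. set (h := (1/2) ^ N) in *.
    set (b := (INR N + 1 + 1) * ((INR N + 1 + 1) * 1)).
    set (a := (INR N + 1) * ((INR N + 1) * 1)) in *.
    assert (b <= 4 * a) by (unfold a, b; nra).
    assert (0 <= r * p) by (apply Rmult_le_pos; lra).
    assert (b * (r * p) <= 4 * a * (r * p)) by (apply Rmult_le_compat_r; auto).
    assert (0 <= r) by lra.
    assert (a * p * r <= h * r) by (apply Rmult_le_compat_r; auto).
    assert (h * r <= h * (1/8)) by (apply Rmult_le_compat_l; [unfold h; apply pow_le; lra | lra]).
    nra.
Qed.

Lemma S1_small s : 1 <= s -> Sk 1 s <= 1 / 4.
Proof.
  intros Hs. set (r := exp (- PI * s)).
  assert (Hr : 0 <= r <= 1/8).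
  { split. left; apply exp_pos. eapply Rle_trans; [| apply exp_mPI_le]. apply exp_le.
    pose proof PI_RGT_0; nra. }
  assert (Hb : forall N, psum 1 s N <= 2 * r - 2 * r * (1/2) ^ N).
  { induction N.
    - unfold psum, term. simpl. lra.
    - unfold psum. rewrite sum_S. fold (psum 1 s N).
      assert (term 1 s (S N) <= r * (1/2) ^ N).
      { unfold term. replace (2 * 1)%nat with 2%nat by lia.
        assert (exp (- PI * INR (S N) ^ 2 * s) <= r ^ S N).
        { unfold r. rewrite <- exp_nat_mul. apply exp_le. pose proof (INR_le_sq (S N)).
          pose proof PI_RGT_0. assert (0 <= PI * s) by nra. nra. }
        pose proof (pow_aux r N Hr).
        assert (0 <= INR (S N) ^ 2) by (apply pow_le, pos_INR).
        apply Rle_trans with (INR (S N) ^ 2 * r ^ S N). apply Rmult_le_compat_l; auto.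
        rewrite S_INR. rewrite <- (tech_pow_Rmult r N).
        replace ((INR N + 1) ^ 2 * (r * r ^ N)) with (r * ((INR N + 1) ^ 2 * r ^ N)) by ring.
        apply Rmult_le_compat_l; lra. }
      simpl pow. lra. }
  apply Rle_trans with (2 * r).
  - apply (@Rle_cv_lim (psum 1 s) (fun _ => 2 * r) (Sk 1 s) (2 * r)); [| apply Sk_spec; lra | ].
    + intros N. specialize (Hb N). assert (0 <= r * (1/2) ^ N) by (apply Rmult_le_pos; [lra | apply pow_le; lra]). lra.
    + intros eps He. exists 0%nat. intros. unfold Rdist. rewrite Rminus_eq_0, Rabs_R0; auto.
  - lra.
Qed.

Definition Fn (y : R) := y * (-2 * PI * Sk 1 y).
Definition Fd (y : R) := 2 * Sk 0 y - 1.
Definition F (y : R) := Fn y / Fd y.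
Definition Fn' (c : R) := 1 * (-2 * PI * Sk 1 c) + c * (-2 * PI * (- PI * Sk 2 c)).
Definition Fd' (c : R) := 2 * (- PI * Sk 1 c) - 0.
Definition F' (c : R) := (Fn' c * Fd c - Fd' c * Fn c) / (Fd c) ^ 2.

Lemma F_deriv c : 0 < c -> derivable_pt_lim F c (F' c).
Proof.
  intros Hc.
  assert (H1 : derivable_pt_lim Fn c (Fn' c)).
  { unfold Fn, Fn'. apply (derivable_pt_lim_mult id (fun y => -2 * PI * Sk 1 y)).
    apply derivable_pt_lim_id. apply (derivable_pt_lim_scal (Sk 1) (-2 * PI)). apply Sk_deriv; auto. }
  assert (H2 : derivable_pt_lim Fd c (Fd' c)).
  { unfold Fd, Fd'. apply (derivable_pt_lim_minus (fun y => 2 * Sk 0 y) (fun _ => 1)).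
    apply (derivable_pt_lim_scal (Sk 0) 2). apply Sk_deriv; auto. apply derivable_pt_lim_const. }
  assert (H3 : Fd c <> 0) by (unfold Fd; pose proof (S0_ge1 c Hc); lra).
  unfold F, F'. replace (Fd c ^ 2) with (Rsqr (Fd c)) by (unfold Rsqr; ring).
  apply (derivable_pt_lim_div Fn Fd); auto.
Qed.

Lemma F'_pos c : 1 < c -> 0 < F' c.
Proof.
  intros Hc. assert (Hc0 : 0 < c) by lra.
  pose proof (S0_ge1 c Hc0). pose proof (S1_pos c Hc0). pose proof (S2_ge_S1 c Hc0).
  pose proof (S1_small c (Rlt_le _ _ Hc)). pose proof PI2_3_2.
  unfold F', Fn', Fd', Fd, Fn.
  set (a := Sk 0 c) in *. set (b := Sk 1 c) in *. set (e := Sk 2 c) in *.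
  set (th := 2 * a - 1).
  assert (Hth : 1 <= th) by (unfold th; lra).
  apply Rdiv_lt_0_compat; [| apply pow_lt; lra].
  replace ((1 * (-2 * PI * b) + c * (-2 * PI * (- PI * e))) * th - (2 * (- PI * b) - 0) * (c * (-2 * PI * b)))
    with (2 * PI * ((PI * c * e - b) * th - 2 * PI * c * b * b)) by ring.
  apply Rmult_lt_0_compat. lra.
  assert (Hpc : 3 < PI * c) by nra.
  assert (Hpcb : 0 <= PI * c * b) by (apply Rmult_le_pos; lra).
  assert (H5 : 0 <= PI * c * (e - b)) by (apply Rmult_le_pos; lra).
  assert (HX : (PI * c - 1) * b <= PI * c * e - b) by lra.
  assert (HX0 : 0 <= (PI * c - 1) * b) by (apply Rmult_le_pos; lra).
  assert (H6 : (PI * c * e - b) * 1 <= (PI * c * e - b) * th) by (apply Rmult_le_compat_l; lra).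
  assert (H7 : 2 * PI * c * b * b <= PI * c * b / 2).
  { assert (0 <= PI * c * b * (1/2 - 2 * b)) by (apply Rmult_le_pos; lra). lra. }
  assert (H8 : PI * c * b / 2 < (PI * c - 1) * b).
  { assert (0 < b * (PI * c / 2 - 1)) by (apply Rmult_lt_0_compat; lra). lra. }
  lra.
Qed.

Theorem mainTheorem10 (th' : R -> R)
  (Hder : forall s, 0 < s -> derivable_pt_lim theta3 s (th' s)) :
  forall s t, 1 <= s -> s < t ->
    s * th' s / theta3 s < t * th' t / theta3 t.
Proof.
  intros s t Hs Hst.
  assert (E : forall y, 0 < y -> y * th' y / theta3 y = F y).
  { intros y Hy. unfold F, Fn, Fd. rewrite theta3_eq by auto.
    rewrite (uniqueness_limite theta3 y (th' y) _ (Hder y Hy) (theta3_deriv y Hy)).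
    f_equal. ring. }
  rewrite !E by lra.
  destruct (MVT_cor2 F F' s t Hst) as [c [Hc1 Hc2]].
  { intros c Hc. apply F_deriv. lra. }
  pose proof (F'_pos c ltac:(lra)). nra.
Qed.
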